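(* (Euler's Formula for Resistance Function I.) Let $\Gamma$ be a metrized graph whose edges are $e_1,\dots,e_m$, where $e_i$ has end points $p_i,q_i$ and length $L_i$. For $s,t\in V(\Gamma)$ let $B=\{e_i\in E(\Gamma): s \text{ and } t \text{ are disconnected in } \Gamma-e_i\}$. Then $$r(s,t)=\sum_{e_i\in B}L_i+\sum_{\substack{e_i\in E(\Gamma)\\ e_i \text{ not a bridge}}}\frac{L_i}{(L_i+R_i)^2}\big(j^{\Gamma-e_i}_{p_i}(q_i,s)-j^{\Gamma-e_i}_{p_i}(q_i,t)\big)^2=\sum_{e_i\in B}L_i+\sum_{\substack{e_i\in E(\Gamma)\\ e_i \text{ not a bridge}}}\frac{1}{L_i}\big(j_{p_i}(q_i,s)-j_{p_i}(q_i,t)\big)^2.$$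
   Context: A metrized graph $\Gamma$ is a finite connected graph (multiple edges and self-loops allowed) in which each edge is identified with a closed line segment of positive length; $V(\Gamma)$ is a chosen finite vertex set and $E(\Gamma)$ the resulting edge set. $\Gamma$ is regarded as a resistive electric circuit in which each edge is a resistor whose resistance equals its length. $r(x,y)$ is the effective resistance between $x$ and $y$; $j_z(x,y)$ is the voltage at $x$ when a unit current enters at $y$ and exits at $z$, with reference voltage $0$ at $z$. $\Gamma-e_i$ is obtained by deleting the interior of $e_i$; $e_i$ is a bridge if $\Gamma-e_i$ is disconnected; for non-bridge $e_i$, $R_i:=r_{\Gamma-e_i}(p_i,q_i)$, and $j^{\Gamma-e_i}$ is the voltage function of $\Gamma-e_i$. *)

(* Defs.v *)
(* A metrized graph is modelled by its underlying finite
   multigraph (vertex finType V, edge finType E, endpoints p q : E -> V,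
   lengths L : E -> R, all positive), viewed as a resistive circuit in which
   edge e is a resistor of resistance L e. *)
From HB Require Import structures.
From mathcomp Require Import all_boot all_order all_algebra.
From Stdlib Require Import ClassicalEpsilon.
Set Implicit Arguments. Unset Strict Implicit. Unset Printing Implicit Defensive.
Import Order.TTheory GRing.Theory Num.Theory.
Local Open Scope ring_scope.

Section Circuit.
Variables (R : realFieldType) (V E : finType) (p q : E -> V) (L : E -> R).

Definition adj (keep : pred E) : rel V := fun x y =>
  [exists e, keep e && (((p e == x) && (q e == y)) || ((p e == y) && (q e == x)))].

Definition graph_connected (keep : pred E) : bool :=
  [forall x, forall y, connect (adj keep) x y].

Definition lap (keep : pred E) (f : V -> R) (v : V) : R :=
  \sum_(e | keep e && (p e == v)) (f v - f (q e)) / L e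
  + \sum_(e | keep e && (q e == v)) (f v - f (p e)) / L e.

(* f is the potential when a unit current enters at y and exits at z,
   with reference potential 0 at z *)
Definition is_voltage (keep : pred E) (z y : V) (f : V -> R) : Prop :=
  f z = 0 /\ forall v, lap keep f v = (v == y)%:R - (v == z)%:R.

(* j_z(x,y) in the subgraph with edge set [keep] *)
Definition volt (keep : pred E) (z x y : V) : R :=
  epsilon (inhabits (fun _ : V => 0 : R)) (is_voltage keep z y) x.

Definition res (keep : pred E) (x y : V) : R := volt keep y x x.

End Circuit.

(* Main.v *)
Require Import Defs.
From HB Require Import structures.
From mathcomp Require Import all_boot all_order all_algebra.
From mathcomp Require Import ring lra.
From Stdlib Require Import ClassicalEpsilon.
Set Implicit Arguments. Unset Strict Implicit. Unset Printing Implicit Defensive.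
Import Order.TTheory GRing.Theory Num.Theory.
Local Open Scope ring_scope.

Section Helpers.
Variables (R : realFieldType) (V E : finType) (p q : E -> V) (L : E -> R).
Hypothesis Lpos : forall e, 0 < L e.

Lemma adj_sym keep : symmetric (adj p q keep).
Proof.
move=> x y; apply/existsP/existsP => -[e /andP[ke H]]; exists e;
  rewrite ke /=; by rewrite orbC.
Qed.

Lemma connect_sym_adj keep : connect_sym (adj p q keep).
Proof. exact/sym_connect_sym/adj_sym. Qed.

Lemma sum_incident keep (H : E -> V -> R) (a : E -> V) :
  \sum_v \sum_(e | keep e && (a e == v)) H e v = \sum_(e | keep e) H e (a e).
Proof.
rewrite (exchange_big_dep keep) /=; last by move=> v e _ /andP[].
apply: eq_bigr => e ke; rewrite (big_pred1 (a e)) // => v.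
by rewrite /= ke /= eq_sym.
Qed.

Lemma green keep (f g : V -> R) :
  \sum_v g v * lap p q L keep f v =
  \sum_(e | keep e) (g (p e) - g (q e)) * (f (p e) - f (q e)) / L e.
Proof.
rewrite /lap.
under eq_bigr do rewrite mulrDr !mulr_sumr.
rewrite big_split /= !sum_incident -big_split /=.
apply: eq_bigr => e _; rewrite !mulrA -mulrDl; congr (_ / _); ring.
Qed.

Lemma lap_sum0 keep f : \sum_v lap p q L keep f v = 0.
Proof.
have := green keep f (fun _ => 1).
under eq_bigr do rewrite mul1r.
move=> ->; apply: big1 => e _; by rewrite subrr mul0r mul0r.
Qed.

Lemma lap_lin keep (a b c : R) f g v :
  lap p q L keep (fun x => a * f x + b * g x + c) v =
  a * lap p q L keep f v + b * lap p q L keep g v.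
Proof.
rewrite /lap !mulrDr !mulr_sumr; rewrite addrACA -!big_split /=.
congr (_ + _); apply: eq_bigr => e _; rewrite !mulrA -mulrDl; congr (_ / _); ring.
Qed.

Lemma lap_sum keep (I : finType) (a : I -> R) (h : I -> V -> R) v :
  lap p q L keep (fun x => \sum_i a i * h i x) v =
  \sum_i a i * lap p q L keep (h i) v.
Proof.
rewrite /lap; under [RHS]eq_bigr do rewrite mulrDr !mulr_sumr.
rewrite big_split /= exchange_big [in X in _ = _ + X]exchange_big /=.
congr (_ + _); apply: eq_bigr => e _;
  rewrite -sumrB mulr_suml; apply: eq_bigr => i _; rewrite mulrA mulrBr //.
Qed.

Lemma lap_ext keep f g v : f =1 g -> lap p q L keep f v = lap p q L keep g v.
Proof. by move=> H; rewrite /lap; congr (_ + _); apply: eq_bigr => e _; rewrite !H. Qed.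

Lemma sum_delta (y : V) : \sum_v ((v == y)%:R : R) = 1.
Proof.
rewrite (bigD1 y) //= eqxx big1 ?addr0 // => v /negPf -> //.
Qed.

Lemma connP keep x y : graph_connected p q keep -> connect (adj p q keep) x y.
Proof. by move=> /forallP /(_ x) /forallP /(_ y). Qed.

Lemma harm_const keep f : graph_connected p q keep ->
  (forall v, lap p q L keep f v = 0) -> forall x y, f x = f y.
Proof.
move=> cn H.
have E0 : \sum_(e | keep e) (f (p e) - f (q e)) * (f (p e) - f (q e)) / L e = 0.
  by rewrite -green big1 // => v _; rewrite H mulr0.
have Hz : forall e, keep e -> f (p e) = f (q e).
  move=> e ke; have := psumr_eq0P _ E0 ke.
  have nn : forall e, keep e -> 0 <= (f (p e) - f (q e)) * (f (p e) - f (q e)) / L e.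
    by move=> e' _; rewrite -expr2 divr_ge0 ?sqr_ge0 // ltW.
  move=> /(_ nn) /eqP; rewrite mulf_eq0 invr_eq0 (gt_eqF (Lpos e)) orbF.
  by rewrite mulf_eq0 orbb subr_eq0 => /eqP.
move=> x y.
have cl : closed (adj p q keep) [pred z | f z == f y].
  move=> a b /existsP[e /andP[ke /orP[/andP[/eqP<- /eqP<-]|/andP[/eqP<- /eqP<-]]]];
  by rewrite !inE /= Hz.
have := closed_connect cl (connP x y cn).
by rewrite !inE eqxx => /eqP.
Qed.

Lemma volt_unique keep z y f g : graph_connected p q keep ->
  is_voltage p q L keep z y f -> is_voltage p q L keep z y g -> f =1 g.
Proof.
move=> cn [fz lf] [gz lg] x.
have H : forall v, lap p q L keep (fun x => 1 * f x + (-1) * g x + 0) v = 0.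
  by move=> v; rewrite lap_lin lf lg; ring.
have := harm_const cn H x z; rewrite fz gz.
move=> Hx; apply/eqP; rewrite -subr_eq0; apply/eqP.
by move: Hx; rewrite !addr0 mul1r mulN1r !mulr0 addr0 => ->.
Qed.

Lemma volt_exists keep z y : graph_connected p q keep ->
  exists f, is_voltage p q L keep z y f.
Proof.
move=> cn.
pose G (f : V -> R) v := lap p q L keep f v + f z.
pose n := #|V|.
pose M : 'M[R]_n := \matrix_(i, j) G (fun x => ((enum_rank x == i)%:R : R)) (enum_val j).
pose fu (u : 'rV[R]_n) x := u 0 (enum_rank x).
have fuE : forall u x, fu u x = \sum_i u 0 i * ((enum_rank x == i)%:R : R).
  move=> u x; rewrite (bigD1 (enum_rank x)) //= eqxx mulr1 big1 ?addr0 //.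
  by move=> i; rewrite eq_sym => /negPf ->; rewrite mulr0.
have ME : forall u j, (u *m M) 0 j = G (fu u) (enum_val j).
  move=> u j; rewrite !mxE /G.
  rewrite (lap_ext _ _ (fuE u)) fuE.
  rewrite lap_sum -big_split /=; apply: eq_bigr => i _; rewrite mxE mulrDr //.
have n0 : (0 < n)%N by apply/card_gt0P; exists z.
have Gsum : forall f, \sum_v G f v = f z *+ n.
  by move=> f; rewrite big_split /= lap_sum0 add0r sumr_const.
have Gz0 : forall f, \sum_v G f v = 0 -> f z = 0.
  move=> f; rewrite Gsum => /eqP.
  by rewrite mulrn_eq0 -(negbK (n == 0)%N) -lt0n n0 /= => /eqP.
have inj : forall u : 'rV[R]_n, u *m M = 0 -> u = 0.
  move=> u uM.
  have HG : forall v, G (fu u) v = 0.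
    by move=> v; rewrite -(enum_rankK v) -ME uM mxE.
  have fz0 : fu u z = 0.
    by apply: Gz0; rewrite big1.
  have lap0 : forall v, lap p q L keep (fu u) v = 0.
    by move=> v; have := HG v; rewrite /G fz0 addr0.
  apply/rowP => j; rewrite mxE.
  have := harm_const cn lap0 (enum_val j) z; rewrite fz0 /fu enum_valK.
  by [].
have Mu : M \in unitmx.
  rewrite -row_free_unit -kermx_eq0; apply/eqP/row_matrixP => i.
  by rewrite row0; apply: inj; rewrite -row_mul mulmx_ker row0.
pose b : 'rV[R]_n := \row_j ((enum_val j == y)%:R - (enum_val j == z)%:R).
pose u := b *m invmx M.
have uM : u *m M = b by rewrite -mulmxA mulVmx // mulmx1.
have HG : forall v, G (fu u) v = (v == y)%:R - (v == z)%:R.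
  by move=> v; rewrite -(enum_rankK v) -ME uM mxE.
have fz0 : fu u z = 0.
  by apply: Gz0; under eq_bigr do rewrite HG; rewrite sumrB !sum_delta subrr.
exists (fu u); split => // v; have := HG v; rewrite /G fz0 addr0 //.
Qed.

Lemma volt_spec keep z y : graph_connected p q keep ->
  is_voltage p q L keep z y (fun x => volt p q L keep z x y).
Proof.
move=> cn; exact: (epsilon_spec _ _ (volt_exists z y cn)).
Qed.

Lemma volt_eq keep z y f : graph_connected p q keep ->
  is_voltage p q L keep z y f -> forall x, volt p q L keep z x y = f x.
Proof. by move=> cn Hf; apply: volt_unique cn (volt_spec z y cn) Hf. Qed.

Lemma sum_delta_mul (g : V -> R) y : \sum_v g v * (v == y)%:R = g y.
Proof.
rewrite (bigD1 y) //= eqxx mulr1 big1 ?addr0 // => v /negPf ->; by rewrite mulr0.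
Qed.

Lemma energy keep s t : graph_connected p q keep ->
  volt p q L keep t s s = \sum_(e | keep e)
     (volt p q L keep t (p e) s - volt p q L keep t (q e) s) ^+ 2 / L e.
Proof.
move=> cn; have [vt vl] := volt_spec t s cn.
under [RHS]eq_bigr do rewrite expr2.
rewrite -green; under eq_bigr do rewrite vl mulrBr.
rewrite sumrB !sum_delta_mul /=; move: vt; rewrite /volt /= => ->; by rewrite subr0.
Qed.

Lemma energy_ge0 keep s t : graph_connected p q keep -> 0 <= volt p q L keep t s s.
Proof.
move=> cn; rewrite energy //; apply: sumr_ge0 => e _.
by rewrite divr_ge0 ?sqr_ge0 // ltW.
Qed.

Lemma volt_diff keep a b s t : graph_connected p q keep ->
  volt p q L keep a b s - volt p q L keep a b t =
  volt p q L keep t b s - volt p q L keep t a s.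
Proof.
move=> cn.
have [az al] := volt_spec a s cn.
have [bz bl] := volt_spec a t cn.
pose k := - (volt p q L keep a t s - volt p q L keep a t t).
have Hg : is_voltage p q L keep t s (fun x => 1 * volt p q L keep a x s
            + (-1) * volt p q L keep a x t + k).
  split; first by rewrite /k; ring.
  by move=> v; rewrite lap_lin al bl; ring.
rewrite !(volt_eq cn Hg) az bz /k; ring.
Qed.

Lemma adjT_cases e x y : adj p q predT x y ->
  adj p q (predC1 e) x y \/ ((x == p e) && (y == q e) || (x == q e) && (y == p e)).
Proof.
move=> /existsP [e' /andP[_ H]]; case: (e' =P e) => [<-|ne].
  by right; case/orP: H => /andP[/eqP-> /eqP->]; rewrite !eqxx ?orbT.
by left; apply/existsP; exists e'; rewrite /= H andbT; apply/eqP.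
Qed.

Lemma lap_split e f v : lap p q L predT f v = lap p q L (predC1 e) f v
   + ((p e == v)%:R - (q e == v)%:R) * (f (p e) - f (q e)) / L e.
Proof.
rewrite /lap /= [in RHS]big_mkcondr [in RHS]big_mkcondr /= [in LHS]big_mkcond [in LHS](bigD1 e) //= [in X in _ + X = _]big_mkcond [in X in _ + X = _](bigD1 e) //=.
have H : forall a b : R, a * b / L e = a * (b / L e) by move=> a b; rewrite mulrA.
rewrite H.
set A := \sum_(i | i != e) (if p i == v then _ else _).
set B := \sum_(i | i != e) (if q i == v then _ else _).
case: (p e =P v) => [pv|_]; case: (q e =P v) => [qv|_]; rewrite ?eqxx /=.
- subst v; rewrite qv; ring.
- subst v; ring.
- subst v; ring.
- ring.
Qed.

Section Conn.
Hypothesis conn : graph_connected p q predT.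

Lemma bridge_split e x : ~~ graph_connected p q (predC1 e) ->
  connect (adj p q (predC1 e)) (p e) x || connect (adj p q (predC1 e)) (q e) x.
Proof.
move=> _.
pose a := [pred z | connect (adj p q (predC1 e)) (p e) z || connect (adj p q (predC1 e)) (q e) z].
have cl : closed (adj p q predT) a.
  move=> y z /(adjT_cases e) [H|].
    have c1 := connect_closed (connect_sym_adj (predC1 e)) (p e).
    have c2 := connect_closed (connect_sym_adj (predC1 e)) (q e).
    move: (c1 _ _ H) (c2 _ _ H); rewrite !inE /= => -> -> //.
  by case/orP => /andP[/eqP-> /eqP->]; rewrite !inE !connect0 ?orbT.
have := closed_connect cl (connP (p e) x conn).
by rewrite !inE connect0 /= => <-.
Qed.

Lemma bridge_pq e : ~~ graph_connected p q (predC1 e) ->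
  ~~ connect (adj p q (predC1 e)) (p e) (q e).
Proof.
move=> nb; apply/negP => pq; move/negP: nb; apply.
apply/forallP => x; apply/forallP => y.
have : connect (adj p q predT) x y by exact: connP.
apply: connect_sub => u w /(adjT_cases e) [H|]; first exact: connect1.
case/orP => /andP[/eqP-> /eqP->] //.
by rewrite connect_sym_adj.
Qed.

Lemma adj_edge e e' : e' != e -> adj p q (predC1 e) (p e') (q e').
Proof. by move=> ne; apply/existsP; exists e'; rewrite /= ne !eqxx. Qed.

Lemma bridge_term e s t : ~~ graph_connected p q (predC1 e) ->
  (volt p q L predT t (p e) s - volt p q L predT t (q e) s) ^+ 2 / L e =
  if ~~ connect (adj p q (predC1 e)) s t then L e else 0.
Proof.
move=> nb.
set A := adj p q (predC1 e).
pose g x : R := (connect A (p e) x)%:R.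
have [ft fl] := volt_spec t s conn.
have G := green predT (fun x => volt p q L predT t x s) g.
rewrite (eq_bigr (fun v => g v * (v == s)%:R - g v * (v == t)%:R)) in G; last first.
  by move=> v _; rewrite fl mulrBr.
rewrite sumrB !sum_delta_mul (bigD1 e) //= big1 ?addr0 in G; last first.
  move=> e' ne; rewrite /g.
  have cl := connect_closed (connect_sym_adj (predC1 e)) (p e).
  by move: (cl _ _ (adj_edge ne)); rewrite !inE => ->; rewrite subrr !mul0r.
rewrite /g connect0 (negPf (bridge_pq nb)) subr0 mul1r in G.
have D : volt p q L predT t (p e) s - volt p q L predT t (q e) s = (g s - g t) * L e.
  by rewrite G mulfVK // gt_eqF.
rewrite D.
have cl := connect_closed (connect_sym_adj (predC1 e)) (p e).
case: ifP => [nst|/negbFE st].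
  rewrite /g.
  case Cs: (connect A (p e) s); case Ct: (connect A (p e) t) => /=.
  - exfalso; move/negP: nst; apply.
    by apply: connect_trans Ct; rewrite connect_sym_adj.
  - by field; rewrite gt_eqF.
  - by field; rewrite gt_eqF.
  - exfalso; move/negP: nst; apply.
    have := bridge_split s nb; rewrite Cs /= => Cs'.
    have := bridge_split t nb; rewrite Ct /= => Ct'.
    by apply: connect_trans Ct'; rewrite connect_sym_adj.
move: (closed_connect cl st); rewrite !inE /g /A => ->; by rewrite subrr !mul0r expr0n /= mul0r.
Qed.

Lemma nonbridge_term2 e s t :
  (volt p q L predT t (p e) s - volt p q L predT t (q e) s) ^+ 2 / L e =
  (volt p q L predT (p e) (q e) s - volt p q L predT (p e) (q e) t) ^+ 2 / L e.
Proof. by rewrite volt_diff // -opprB sqrrN. Qed.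

Lemma nonbridge_term e s t : graph_connected p q (predC1 e) ->
  (volt p q L predT t (p e) s - volt p q L predT t (q e) s) ^+ 2 / L e =
  L e / (L e + res p q L (predC1 e) (p e) (q e)) ^+ 2
  * (volt p q L (predC1 e) (p e) (q e) s - volt p q L (predC1 e) (p e) (q e) t) ^+ 2.
Proof.
move=> cn'.
rewrite volt_diff // /res.
set Rr := volt p q L (predC1 e) (q e) (p e) (p e).
have R0 : 0 <= Rr by exact: energy_ge0.
have LR : L e + Rr != 0 by rewrite gt_eqF // ltr_wpDr.
have L0 : L e != 0 by rewrite gt_eqF.
have [ft fl] := volt_spec t s cn'.
have [rq rl] := volt_spec (q e) (p e) cn'.
set f' := fun x => volt p q L (predC1 e) t x s in ft fl *.
set r := fun x => volt p q L (predC1 e) (q e) x (p e) in rq rl *.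
have rp : r (p e) = Rr by [].
set D := f' (p e) - f' (q e).
pose c := D / (L e + Rr).
pose k := - (f' t - c * r t).
have Hg : is_voltage p q L predT t s (fun x => 1 * f' x + (- c) * r x + k).
  split; first by rewrite /k; ring.
  move=> v; rewrite (lap_split e) lap_lin fl rl /= (rq : r (q e) = 0) rp ![_ == v]eq_sym /c.
  move: (_ == s)%:R (_ == t)%:R (_ == p e)%:R (_ == q e)%:R => a1 a2 a3 a4.
  rewrite /D; field; by rewrite L0 LR.
rewrite !(volt_eq conn Hg) (rq : r (q e) = 0) rp /k /c.
change (volt p q L (predC1 e) t (q e) s) with (f' (q e)).
change (volt p q L (predC1 e) t (p e) s) with (f' (p e)).
rewrite /D; field; by rewrite L0 LR.
Qed.

End Conn.

End Helpers.

Unset Implicit Arguments.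
Set Strict Implicit.

Theorem theorem3p7 (R : realFieldType) (V E : finType) (p q : E -> V)
    (L : E -> R) (Lpos : forall e, 0 < L e)
    (conn : graph_connected p q predT) (s t : V) :
  let B := [pred e | ~~ connect (adj p q (predC1 e)) s t] in
  let nonbridge := [pred e | graph_connected p q (predC1 e)] in
  let Ri := fun e => res p q L (predC1 e) (p e) (q e) in
  res p q L predT s t =
    \sum_(e | B e) L e
    + \sum_(e | nonbridge e)
        L e / (L e + Ri e) ^+ 2
        * (volt p q L (predC1 e) (p e) (q e) s
           - volt p q L (predC1 e) (p e) (q e) t) ^+ 2
  /\
  res p q L predT s t =
    \sum_(e | B e) L e
    + \sum_(e | nonbridge e)
        (volt p q L predT (p e) (q e) s - volt p q L predT (p e) (q e) t) ^+ 2
        / L e.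
Proof.
move=> B nonbridge Ri.
have En : res p q L predT s t = \sum_(e | predT e)
     (volt p q L predT t (p e) s - volt p q L predT t (q e) s) ^+ 2 / L e.
  by rewrite /res (energy Lpos).
have nB : forall e, nonbridge e -> B e = false.
  by move=> e nb; rewrite /B inE /= (connP s t nb).
split; rewrite En (big_mkcond B) (big_mkcond nonbridge) -big_split /=;
  apply: eq_bigr => e _; case: (boolP (nonbridge e)) => nb.
- have nb' : graph_connected p q (predC1 e) by exact: nb.
  by rewrite (connP s t nb') nb' /= add0r (nonbridge_term Lpos conn).
- have nb' : ~~ graph_connected p q (predC1 e) by exact: nb.
  by rewrite (negPf nb') addr0 (bridge_term Lpos conn).
- have nb' : graph_connected p q (predC1 e) by exact: nb.
  by rewrite (connP s t nb') nb' /= add0r (nonbridge_term2 Lpos conn).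
- have nb' : ~~ graph_connected p q (predC1 e) by exact: nb.
  by rewrite (negPf nb') addr0 (bridge_term Lpos conn).
Qed.
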